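(* Let $t,\Delta\in\mathbb{N}$. If $A$ $(t,\Delta)$-approximates $B$ and $B$ $(t,\Delta)$-approximates $C$, then $A$ $(t,\Delta)$-approximates $C$.
   Context: $\mathbb{N}=\{0,1,2,\dots\}$, $[t]=\{0,1,\dots,t\}$. For $A\subseteq[t]$ and $b\in\mathbb{N}$ define $\mathrm{apx}^-_t(b,A)=\max\{a\in A\cup\{t+1\}: a\le b\}$ and $\mathrm{apx}^+_t(b,A)=\min\{a\in A\cup\{t+1\}: a\ge b\}$, with $\max\emptyset=-\infty$, $\min\emptyset=\infty$. For $A,B\subseteq\mathbb{N}$, $A$ $(t,\Delta)$-approximates $B$ if $A\subseteq B\subseteq[t]$ and for every $b\in B$, $\mathrm{apx}^+_t(b,A)-\mathrm{apx}^-_t(b,A)\le\Delta$. *)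

(* Defs.v *)
From Stdlib Require Import Arith ZArith Lia.

Definition ext (t : nat) (A : nat -> Prop) (a : nat) : Prop := A a \/ a = S t.

(* apx^-_t(b,A) = m, where None encodes -infinity (max of the empty set). *)
Definition apx_minus (t : nat) (A : nat -> Prop) (b : nat) (m : option nat) : Prop :=
  match m with
  | Some a => ext t A a /\ a <= b /\ (forall a', ext t A a' -> a' <= b -> a' <= a)
  | None => forall a', ext t A a' -> ~ a' <= b
  end.

(* apx^+_t(b,A) = p, where None encodes +infinity (min of the empty set). *)
Definition apx_plus (t : nat) (A : nat -> Prop) (b : nat) (p : option nat) : Prop :=
  match p with
  | Some a => ext t A a /\ b <= a /\ (forall a', ext t A a' -> b <= a' -> a <= a')
  | None => forall a', ext t A a' -> ~ b <= a'
  end.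

(* p - m <= Delta in the extended integers (with p = +oo or m = -oo the
   difference is +oo, which is never <= Delta); the difference is an integer. *)
Definition ediff_le (p m : option nat) (Delta : nat) : Prop :=
  match p, m with
  | Some a, Some c => (Z.of_nat a - Z.of_nat c <= Z.of_nat Delta)%Z
  | _, _ => False
  end.

Definition approximates (t Delta : nat) (A B : nat -> Prop) : Prop :=
  (forall x, A x -> B x) /\
  (forall x, B x -> x <= t) /\
  (forall b, B b -> exists m p,
      apx_minus t A b m /\ apx_plus t A b p /\ ediff_le p m Delta).

(* Main.v *)
Require Import Defs.
From Stdlib Require Import Arith Lia.
From Stdlib Require Import Classical ZArith.

Lemma ext_sub t (A B : nat -> Prop) : (forall x, A x -> B x) -> forall x, ext t A x -> ext t B x.
Proof. intros H x [Hx|Hx]; [left; auto|right; auto]. Qed.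

Theorem lemma4p2 (t Delta : nat) (A B C : nat -> Prop) :
  approximates t Delta A B -> approximates t Delta B C -> approximates t Delta A C.
Proof.
  intros [HAB [HBt HA]] [HBC [HCt HB]].
  split; [auto|split; [auto|]].
  intros c Hc.
  assert (Hct := HCt c Hc).
  destruct (HB c Hc) as [[mB|] [[pB|] [HmB [HpB Hd]]]]; simpl in Hd; try tauto.
  destruct HmB as [HmBe [HmBc HmBmax]].
  destruct HpB as [HpBe [HpBc HpBmin]].
  assert (HmBB : B mB) by (destruct HmBe as [H|H]; [auto|lia]).
  destruct (HA mB HmBB) as [[m'|] [[p'|] [Hm' [Hp' Hd']]]]; simpl in Hd'; try tauto.
  destruct Hm' as [Hm'e [Hm'le Hm'max]].
  destruct Hp' as [Hp'e [Hp'le Hp'min]].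
  assert (Hminus : apx_minus t A c (Some m')).
  { simpl. split; [auto|split; [lia|]].
    intros a' Ha' Hle. apply Hm'max; auto.
    apply HmBmax; auto. eapply ext_sub; eauto. }
  destruct (classic (ext t A pB)) as [HpA|HpA].
  - exists (Some m'), (Some pB). split; [auto|split].
    + simpl. split; [auto|split; [lia|]].
      intros a' Ha' Hle. apply HpBmin; auto. eapply ext_sub; eauto.
    + simpl. destruct (le_lt_dec p' c) as [Hpc|Hpc].
      * assert (p' <= mB) by (apply HmBmax; auto; eapply ext_sub; eauto).
        assert (mB <= m') by (apply Hm'max; auto; replace mB with p' by lia; auto).
        lia.
      * assert (pB <= p') by (apply HpBmin; [eapply ext_sub; eauto|lia]).
        assert (p' <= pB) by (apply Hp'min; auto; lia).
        lia.
  - assert (HpBB : B pB) by (destruct HpBe as [H|H]; [auto|subst; exfalso; apply HpA; right; auto]).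
    destruct (HA pB HpBB) as [[m''|] [[p''|] [Hm'' [Hp'' Hd'']]]]; simpl in Hd''; try tauto.
    destruct Hm'' as [Hm''e [Hm''le Hm''max]].
    destruct Hp'' as [Hp''e [Hp''le Hp''min]].
    exists (Some m'), (Some p''). split; [auto|split].
    + simpl. split; [auto|split; [lia|]].
      intros a' Ha' Hle. apply Hp''min; auto. apply HpBmin; auto. eapply ext_sub; eauto.
    + simpl.
      assert (m'' <= m').
      { destruct (le_lt_dec m'' c) as [Hmc|Hmc].
        - destruct Hminus as [_ [_ Hmx]]. auto.
        - assert (pB <= m'') by (apply HpBmin; [eapply ext_sub; eauto|lia]).
          assert (m'' = pB) by lia. subst. tauto. }
      lia.
Qed.
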